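(* Let $\mathcal C,\mathcal C'\subseteq\mathbb F_2^n$ be binary linear codes, $\sigma\in S_n$, $G$ a reduced basis of $\mathcal C$ (output of Algorithm R for $\mathcal C$ and the error-vector order built from some admissible order) and $G'$ a reduced basis of $\mathcal C'$ (output of Algorithm R for $\mathcal C'$ and the error-vector order built from some admissible order). Put $G^\star=\sigma(G)$. The following are equivalent: (i) $\mathcal C'=\sigma(\mathcal C)$; (ii) $G^\star$ is a reduced basis for $\mathcal C'$, i.e. it is the output of Algorithm R for $\mathcal C'$ and the error-vector order built from some admissible order (some ordering of the variables); (iii) every binomial of $G^\star$ reduces to zero modulo $G'$, and every binomial of $G'$ reduces to zero modulo $G^\star$.
   Context: Binary setting: $[X]$ is the free commutative monoid on $X=\{x_1,\dots,x_n\}$; $\psi(\prod x_i^{\beta_i})=(\beta_i\bmod 2)_i\in\mathbb F_2^n$; a code of dimension $k$ has parity check matrix $H$ ($n\times(n-k)$, code $=\{c:cH=0\}$); syndrome $\xi(w)=\psi(w)H$. $\mathrm{Ind}(w)=\{i:x_i\mid w\}$. For an admissible order $\prec$ the error-vector order is $u<_e w$ iff $|\mathrm{Ind}(u)|<|\mathrm{Ind}(w)|$, or equality and $u\prec w$. For $\sigma\in S_n$: $\sigma((y_i)_i)=(y_{\sigma^{-1}(i)})_i$, $\sigma(\mathcal C)=\{\sigma(c):c\in\mathcal C\}$, on $[X]$ $\sigma$ is the automorphism $x_i\mapsto x_{\sigma(i)}$, acting termwise on binomials. Algorithm R: list $L$ sorted increasingly by $<_e$, set $N$, set $G$ of binomials;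 initially $L=(1)$, $N=G=\emptyset$. While $L\neq\emptyset$: remove the $<_e$-smallest $w$; if $w$ is divisible by the leading word of a binomial in $G$, discard it; otherwise if some $w'\in N$ has $\xi(w')=\xi(w)$, add $w-w'$ to $G$ with leading word $w$; else add $w$ to $N$ and insert all $wx$ ($x\in X$) into $L$. Output $(N,G)$. For a set $B$ of binomials each with a designated leading word (for $\sigma(G)$, the leading word of $\sigma(u-v)$ is $\sigma(u)$), one-step reduction modulo $B$: a non-standard word (some exponent $\ge2$) reduces to its standard form (exponents mod 2); a standard word $w=us$ with $u-u'\in B$ of leading word $u$ reduces to $u's$. Irreducible means no reduction applies. A binomial $u-v$ reduces to zero modulo $B$ if some irreducible word obtained from $u$ by a finite sequence of one-step reductions equals some irreducible word so obtained from $v$. *)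

(* Defs.v *)
From HB Require Import structures.
From mathcomp Require Import all_boot all_order all_algebra all_fingroup.
From Stdlib Require Import Relations.
Set Implicit Arguments. Unset Strict Implicit. Unset Printing Implicit Defensive.
Import GRing.Theory.
Local Open Scope ring_scope.

(* Words of the free commutative monoid [X], X = {x_0,...,x_{n-1}}:
   exponent vectors. *)
Definition word (n : nat) := {ffun 'I_n -> nat}.

Definition wone (n : nat) : word n := [ffun _ => 0%N].
Definition wmul (n : nat) (u v : word n) : word n := [ffun i => (u i + v i)%N].
Definition xvar (n : nat) (i : 'I_n) : word n := [ffun j => nat_of_bool (j == i)].
Definition wdvd (n : nat) (u w : word n) : bool := [forall i, (u i <= w i)%N].
Definition wstandard (n : nat) (w : word n) : bool := [forall i, (w i <= 1)%N].
Definition wstd (n : nat) (w : word n) : word n := [ffun i => (w i %% 2)%N].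
Definition Ind (n : nat) (w : word n) : {set 'I_n} := [set i | (0 < w i)%N].

Definition psi (n : nat) (w : word n) : 'rV['F_2]_n := \row_i ((w i)%:R).
Definition syndrome (n m : nat) (H : 'M['F_2]_(n, m)) (w : word n) : 'rV['F_2]_m :=
  psi w *m H.

Definition code (n m : nat) (H : 'M['F_2]_(n, m)) : {set 'rV['F_2]_n} :=
  [set c | c *m H == 0].

Definition admissible (n : nat) (lt : word n -> word n -> bool) : Prop :=
  [/\ (forall u, ~~ lt u u),
      (forall u v w, lt u v -> lt v w -> lt u w),
      (forall u w, u != w -> lt u w || lt w u),
      (forall w, w != wone n -> lt (wone n) w) &
      (forall u w s, lt u w -> lt (wmul u s) (wmul w s))].

Definition evlt (n : nat) (lt : word n -> word n -> bool) (u w : word n) : bool :=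
  (#|Ind u| < #|Ind w|)%N || ((#|Ind u| == #|Ind w|) && lt u w).

(* Binomials u - v represented as pairs (u, v) with leading word u. *)
Definition binom (n : nat) := (word n * word n)%type.

(* States (L, N, G) of Algorithm R. L is treated as a set: removing the
   smallest element w removes all its copies. *)
Definition stateR (n : nat) := (seq (word n) * seq (word n) * seq (binom n))%type.

Definition stepR (n m : nat) (H : 'M['F_2]_(n, m)) (lt : word n -> word n -> bool)
  (s s' : stateR n) : Prop :=
  let: (L, N, G) := s in
  exists w, [/\ w \in L,
    (forall v, v \in L -> v != w -> evlt lt w v) &
    let L0 := [seq v <- L | v != w] in
    if has (fun b : binom n => wdvd b.1 w) G then s' = (L0, N, G)
    else if has (fun w' => syndrome H w' == syndrome H w) N then
      exists2 w', w' \in N /\ syndrome H w' = syndrome H w &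
                  s' = (L0, N, rcons G (w, w'))
    else s' = (L0 ++ [seq wmul w (xvar i) | i <- enum 'I_n], rcons N w, G)].

Definition algR_output (n m : nat) (H : 'M['F_2]_(n, m))
  (lt : word n -> word n -> bool) (N : seq (word n)) (G : seq (binom n)) : Prop :=
  clos_refl_trans _ (stepR H lt) ([:: wone n], [::], [::]) ([::], N, G).

Definition reduced_basis (n m : nat) (H : 'M['F_2]_(n, m))
  (lt : word n -> word n -> bool) (G : seq (binom n)) : Prop :=
  exists N, algR_output H lt N G.

Definition vperm (n : nat) (s : {perm 'I_n}) (c : 'rV['F_2]_n) : 'rV['F_2]_n :=
  \row_j c 0 (s^-1%g j).
Definition codeperm (n : nat) (s : {perm 'I_n}) (C : {set 'rV['F_2]_n}) :=
  [set vperm s c | c in C].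
Definition wperm (n : nat) (s : {perm 'I_n}) (w : word n) : word n :=
  [ffun j => w (s^-1%g j)].
Definition bperm (n : nat) (s : {perm 'I_n}) (b : binom n) : binom n :=
  (wperm s b.1, wperm s b.2).

Definition red1 (n : nat) (B : seq (binom n)) (w w' : word n) : Prop :=
  (~~ wstandard w /\ w' = wstd w) \/
  (wstandard w /\ exists2 b, b \in B & exists s, w = wmul b.1 s /\ w' = wmul b.2 s).

Definition irreducible (n : nat) (B : seq (binom n)) (w : word n) : Prop :=
  forall w', ~ red1 B w w'.

Definition reduces_to_zero (n : nat) (B : seq (binom n)) (b : binom n) : Prop :=
  exists w, [/\ clos_refl_trans _ (red1 B) b.1 w,
                clos_refl_trans _ (red1 B) b.2 w & irreducible B w].

(* Main.v *)
Require Import Defs.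
From mathcomp Require Import all_boot all_order all_algebra all_fingroup.
From Stdlib Require Import Relations.
Set Implicit Arguments. Unset Strict Implicit. Unset Printing Implicit Defensive.

Section Words.
Variable n : nat.
Implicit Types u v w x y : word n.

Lemma wmulC u v : wmul u v = wmul v u.
Proof. by apply/ffunP=> i; rewrite !ffunE addnC. Qed.
Lemma wmulA u v w : wmul u (wmul v w) = wmul (wmul u v) w.
Proof. by apply/ffunP=> i; rewrite !ffunE addnA. Qed.
Lemma wmul1 u : wmul (wone n) u = u.
Proof. by apply/ffunP=> i; rewrite !ffunE. Qed.
Lemma wmulw1 u : wmul u (wone n) = u.
Proof. by rewrite wmulC wmul1. Qed.

Lemma wdvdP u w : reflect (exists s, w = wmul u s) (wdvd u w).
Proof.
apply: (iffP forallP) => [h|[s ->] i]; last by rewrite ffunE leq_addr.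
exists [ffun i => w i - u i]; apply/ffunP=> i; rewrite !ffunE subnKC //.
Qed.

Lemma wdvd_refl u : wdvd u u.
Proof. by apply/forallP. Qed.
Lemma wdvd_trans u v w : wdvd u v -> wdvd v w -> wdvd u w.
Proof. move=> /forallP h1 /forallP h2; apply/forallP=> i; exact: leq_trans (h1 i) (h2 i). Qed.

Lemma wdvd1 u : wdvd u (wone n) -> u = wone n.
Proof. by move=> /forallP h; apply/ffunP=> i; move: (h i); rewrite !ffunE leqn0 => /eqP. Qed.

Lemma Ind1 : Ind (wone n) = set0.
Proof. by apply/setP=> i; rewrite !inE ffunE. Qed.

Lemma Ind0 u : Ind u = set0 -> u = wone n.
Proof.
move=> h; apply/ffunP=> i; rewrite ffunE.
have : i \notin Ind u by rewrite h inE.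
by rewrite inE lt0n negbK => /eqP.
Qed.

Variable lt : word n -> word n -> bool.
Hypothesis adm : admissible lt.

Lemma lt_irr u : ~~ lt u u.
Proof. by case: adm. Qed.
Lemma lt_trans u v w : lt u v -> lt v w -> lt u w.
Proof. by case: adm => _ h _ _ _; apply: h. Qed.
Lemma lt_mul u w s : lt u w -> lt (wmul u s) (wmul w s).
Proof. by case: adm => _ _ _ _ h; apply: h. Qed.
Lemma lt1 w : w != wone n -> lt (wone n) w.
Proof. by case: adm => _ _ _ h _; apply: h. Qed.

Lemma lt_dvd x y : wdvd x y -> x = y \/ lt x y.
Proof.
move=> /wdvdP [s ->]; case: (eqVneq s (wone n)) => [->|ns]; first by left; rewrite wmulw1.
by right; have := lt_mul x (lt1 ns); rewrite wmul1 wmulC.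
Qed.

Lemma evlt_irr u : ~~ evlt lt u u.
Proof. by rewrite /evlt ltnn eqxx lt_irr. Qed.

Lemma evlt_trans u v w : evlt lt u v -> evlt lt v w -> evlt lt u w.
Proof.
rewrite /evlt => /orP[h1|/andP[/eqP e1 h1]] /orP[h2|/andP[/eqP e2 h2]].
- by rewrite (ltn_trans h1 h2).
- by rewrite -e2 h1.
- by rewrite e1 h2.
- by rewrite e1 e2 eqxx (lt_trans h1 h2) orbT.
Qed.

Lemma evlt_x w i : evlt lt w (wmul w (xvar i)).
Proof.
rewrite /evlt; case: (boolP (i \in Ind w)) => hi.
  have -> : Ind (wmul w (xvar i)) = Ind w.
    apply/setP=> j; rewrite !inE !ffunE; case: eqP => [->|_]; last by rewrite addn0.
    by move: hi; rewrite inE => ->; rewrite addn1.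
  rewrite ltnn eqxx /=.
  have nx : xvar i != wone n by apply/eqP=> /ffunP/(_ i); rewrite !ffunE eqxx.
  by have := lt_mul w (lt1 nx); rewrite wmul1 wmulC.
have -> : Ind (wmul w (xvar i)) = i |: Ind w.
  apply/setP=> j; rewrite !inE !ffunE; case: eqP => [->|_]; first by rewrite addn1.
  by rewrite addn0.
by rewrite cardsU1 hi add1n ltnSn.
Qed.

Lemma evlt1 u : ~~ evlt lt u (wone n).
Proof. by rewrite /evlt Ind1 cards0 ltn0 /=; apply/andP=> [[/eqP/cards0_eq/Ind0 -> ]]; apply/negP/lt_irr. Qed.


Section Alg.
Variables (m : nat) (H : 'M['F_2]_(n, m)).
Notation syn := (syndrome H).

Definition Inv (st : stateR n) : Prop :=
  let: (L, N, G) := st in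
  [/\ forall b, b \in G -> syn b.1 = syn b.2 /\ evlt lt b.2 b.1,
      forall x y, x \in N -> y \in L -> evlt lt x y &
      uniq (map syn N)].

Lemma Inv_init : Inv ([:: wone n], [::], [::]).
Proof. by split. Qed.

Lemma Inv_step st st' : stepR H lt st st' -> Inv st -> Inv st'.
Proof.
case: st => [[L N] G]; case: st' => [[L' N'] G'] /=.
move=> [w [wL wmin hst]] [iG iNL iu].
have L0P y : y \in [seq v <- L | v != w] -> y \in L /\ y != w.
  by rewrite mem_filter => /andP[].
move: hst; case: ifP => hG.
  by case=> -> -> ->; split=> // x y xN /L0P[yL _]; apply: iNL.
case: ifP => hN.
  move=> [w' [w'N sw'] [-> -> ->]]; split=> //.
  - move=> b; rewrite mem_rcons in_cons => /orP[/eqP->|/iG//].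
    by split=> //=; apply: iNL.
  - by move=> x y xN /L0P[yL _]; apply: iNL.
case=> -> -> ->; split=> //.
- move=> x y; rewrite mem_rcons in_cons mem_cat => /orP[/eqP->|xN] /orP[].
  + by move=> /L0P[yL ny]; apply: wmin.
  + by move=> /mapP[i _ ->]; apply: evlt_x.
  + by move=> /L0P[yL ny]; apply: iNL.
  + by move=> /mapP[i _ ->]; apply: evlt_trans (iNL _ _ xN wL) (evlt_x _ _).
- rewrite map_rcons rcons_uniq iu andbT; apply/mapP=> [[x xN ex]].
  by move/negP: hN; apply; apply/hasP; exists x => //; rewrite ex.
Qed.

Lemma Inv_rt st st' : clos_refl_trans _ (stepR H lt) st st' -> Inv st -> Inv st'.
Proof. elim=> [x y /Inv_step| x | x y z _ IH1 _ IH2] //; auto. Qed.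


Lemma mono_step st st' : stepR H lt st st' ->
  {subset st.1.2 <= st'.1.2} /\ {subset st.2 <= st'.2}.
Proof.
case: st => [[L N] G]; case: st' => [[L' N'] G'] /=.
move=> [w [wL wmin]]; case: ifP => hG; first by case=> _ -> ->; split.
case: ifP => hN; first by move=> [w' _ [_ -> ->]]; split=> // x; rewrite mem_rcons in_cons orbC => ->.
by case=> _ -> ->; split=> // x; rewrite mem_rcons in_cons orbC => ->.
Qed.

Lemma mono_rt st st' : clos_refl_trans _ (stepR H lt) st st' ->
  {subset st.1.2 <= st'.1.2} /\ {subset st.2 <= st'.2}.
Proof.
elim=> [x y | x | x y z _ [h1 h2] _ [h3 h4]].
- exact: mono_step.
- by split.
by split=> a ha; [apply: h3; apply: h1 | apply: h4; apply: h2].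
Qed.

Section Final.
Variables (Nf : seq (word n)) (Gf : seq (binom n)).
Definition Pf w := w \in Nf \/ exists2 b, b \in Gf & wdvd b.1 w.

Lemma back st : clos_refl_trans_1n _ (stepR H lt) st ([::], Nf, Gf) ->
  (forall w, w \in st.1.1 -> Pf w) /\
  (forall w0, w0 \in Nf -> w0 \notin st.1.2 -> forall i, Pf (wmul w0 (xvar i))).
Proof.
move=> h; move Ef : ([::], Nf, Gf) h => fin h; elim: h Ef.
  by move=> st0 <-; split=> // w0 ->.
move=> st0 st1 fin' hs hrt IH Ef; have [IHa IHb] := IH Ef.
have [mN mG] := mono_rt (clos_rt1n_rt _ _ _ _ hrt); rewrite -Ef /= in mN mG.
case: st0 hs => [[L N] G]; clear IH; case: st1 hrt IHa IHb mN mG => [[L' N'] G'] hrt /= IHa IHb mN mG.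
move=> [w [wL wmin hst]].
have L0P y : y \in L -> y != w -> y \in [seq v <- L | v != w].
  by move=> yL yw; rewrite mem_filter yw.
move: hst; case: ifP => hG.
  case=> eL eN eG; subst; split=> [y yL|]; last by [].
  case: (eqVneq y w) => [->|yw]; last by apply: IHa; apply: L0P.
  by right; move/hasP: hG => [b bG hb]; exists b => //; apply: mG.
case: ifP => hN.
  move=> [w' _ [eL eN eG]]; subst; split=> [y yL|]; last by [].
  case: (eqVneq y w) => [->|yw]; last by apply: IHa; apply: L0P.
  by right; exists (w, w') => //=; [apply: mG; rewrite mem_rcons mem_head | apply: wdvd_refl].
case=> eL eN eG; subst; split=> [y yL|w0 w0N w0n i].
  case: (eqVneq y w) => [->|yw]; last by apply: IHa; rewrite mem_cat L0P.
  by left; apply: mN; rewrite mem_rcons mem_head.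
case: (boolP (w0 \in rcons N w)) => h; last exact: IHb.
move: h; rewrite mem_rcons in_cons (negbTE w0n) orbF => /eqP->.
by apply: IHa; rewrite mem_cat; apply/orP; right; apply/mapP; exists i => //; rewrite mem_enum.
Qed.
End Final.


Section Output.
Variables (N : seq (word n)) (G : seq (binom n)).
Hypothesis out : algR_output H lt N G.

Lemma outInv : Inv ([::], N, G).
Proof. exact: Inv_rt out Inv_init. Qed.

Lemma outG b : b \in G -> syn b.1 = syn b.2 /\ evlt lt b.2 b.1.
Proof. by case: outInv => h _ _; apply: h. Qed.

Lemma outU : uniq (map syn N).
Proof. by case: outInv. Qed.

Lemma outCN w : wstandard w -> (forall b, b \in G -> ~~ wdvd b.1 w) -> w \in N.
Proof.
have [hA hB] := back (clos_rt_rt1n _ _ _ _ out).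
have [k] := ubnP #|Ind w|; elim: k w => // k IH w hk hs hnd.
have Pfw : Pf N G w -> w \in N.
  by case=> // [[b bG hb]]; move: (hnd b bG); rewrite hb.
case: (eqVneq (Ind w) set0) => [/Ind0 e|hne].
  by apply: Pfw; apply: hA; rewrite e mem_head.
have [i iI] := set0Pn _ hne.
pose w0 : word n := [ffun j => if j == i then 0%N else w j].
have ew : wmul w0 (xvar i) = w.
  apply/ffunP=> j; rewrite !ffunE; case: eqP => [->|]; last by rewrite addn0.
  move: iI; rewrite inE => wi; move/forallP: hs => /(_ i).
  by case: (w i) wi => // [[|]].
have dw : wdvd w0 w by apply/wdvdP; exists (xvar i).
have w0N : w0 \in N.
  apply: IH.
  - have : Ind w0 \proper Ind w.
      apply/properP; split; last by exists i => //; rewrite inE ffunE eqxx.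
      by apply/subsetP=> j; rewrite !inE ffunE; case: eqP.
    by move/proper_card=> h; apply: leq_trans h _; rewrite -ltnS.
  - apply/forallP=> j; rewrite ffunE; case: eqP => // _.
    by move/forallP: hs.
  - move=> b bG; apply/negP=> hb; move: (hnd b bG); rewrite (wdvd_trans hb dw) //.
apply: Pfw; rewrite -ew; exact: hB.
Qed.

End Output.
End Alg.
End Words.

Import GRing.Theory.
Local Open Scope ring_scope.

Section Syn.
Variable n : nat.
Implicit Types a b s u v w x y : word n.

Lemma psi_mul a b : psi (wmul a b) = psi a + psi b.
Proof. by apply/rowP=> i; rewrite !mxE ffunE natrD. Qed.
Lemma psi_std w : psi (wstd w) = psi w.
Proof. by apply/rowP=> i; rewrite !mxE ffunE Fp_nat_mod. Qed.
Lemma psi1 : psi (wone n) = 0.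
Proof. by apply/rowP=> i; rewrite !mxE ffunE. Qed.

Lemma syn_mul m (M : 'M['F_2]_(n, m)) a b :
  syndrome M (wmul a b) = (syndrome M a + syndrome M b)%R.
Proof. by rewrite /syndrome psi_mul mulmxDl. Qed.
Lemma syn_std m (M : 'M['F_2]_(n, m)) w : syndrome M (wstd w) = syndrome M w.
Proof. by rewrite /syndrome psi_std. Qed.
Lemma syn1 m (M : 'M['F_2]_(n, m)) : syndrome M (wone n) = 0.
Proof. by rewrite /syndrome psi1 mul0mx. Qed.

Lemma red_pres (T : Type) (g : word n -> T) (B : seq (binom n)) :
  (forall a b s, g a = g b -> g (wmul a s) = g (wmul b s)) ->
  (forall w, g (wstd w) = g w) ->
  (forall q : binom n, q \in B -> g q.1 = g q.2) ->
  forall x y, clos_refl_trans _ (red1 B) x y -> g x = g y.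
Proof.
move=> gm gs gB x y; elim=> [{}x {}y [[_ ->]|[_ [b bB [s [-> ->]]]]]| // | x0 y0 z0 _ -> _ -> //].
  by rewrite gs.
by apply: gm; apply: gB.
Qed.

End Syn.

Lemma uniq_map_inj (T1 T2 : eqType) (f : T1 -> T2) s x y :
  uniq (map f s) -> x \in s -> y \in s -> f x = f y -> x = y.
Proof.
elim: s => //= a s IH /andP[na us]; rewrite !in_cons.
move=> /orP[/eqP->|xs] /orP[/eqP->|ys] e //.
- by move: na; rewrite e (map_f f ys).
- by move: na; rewrite -e (map_f f xs).
- exact: IH.
Qed.


Section Red.
Variables (n : nat) (lt : word n -> word n -> bool).
Hypothesis adm : admissible lt.
Implicit Types a b s u v w x y : word n.

Lemma Ind_mul a b : Ind (wmul a b) = Ind a :|: Ind b.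
Proof. by apply/setP=> i; rewrite !inE ffunE addn_gt0. Qed.

Lemma Ind_std w : Ind (wstd w) \subset Ind w.
Proof.
apply/subsetP=> i; rewrite !inE ffunE !lt0n; apply: contra => /eqP->.
by rewrite mod0n.
Qed.

Lemma wdvd_std w : wdvd (wstd w) w.
Proof. by apply/forallP=> i; rewrite ffunE leq_mod. Qed.

Lemma std_id w : wstandard w -> wstd w = w.
Proof.
move=> /forallP h; apply/ffunP=> i; rewrite ffunE modn_small //.
by apply: leq_ltn_trans (h i) _.
Qed.

Lemma std_standard w : wstandard (wstd w).
Proof. by apply/forallP=> i; rewrite ffunE -ltnS ltn_mod. Qed.

Lemma evlt_red b1 b2 s : wstandard (wmul b1 s) -> evlt lt b2 b1 ->
  evlt lt (wstd (wmul b2 s)) (wmul b1 s).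
Proof.
move=> hs; set x := wstd _.
have hx : (#|Ind x| <= #|Ind b2| + #|Ind s|)%N.
  apply: leq_trans (subset_leq_card (Ind_std _)) _.
  by rewrite Ind_mul cardsU leq_subr.
have hu : #|Ind (wmul b1 s)| = (#|Ind b1| + #|Ind s|)%N.
  rewrite Ind_mul cardsU; suff -> : Ind b1 :&: Ind s = set0 by rewrite cards0 subn0.
  apply/setP=> i; rewrite !inE; move/forallP: hs => /(_ i); rewrite ffunE.
  by case: (b1 i) => [|[|]] //=; case: (s i).
have ltx : lt b2 b1 -> lt x (wmul b1 s).
  move=> h; have h1 := lt_mul adm s h.
  case: (lt_dvd adm (wdvd_std (wmul b2 s))) => [e|h2]; [by rewrite /x e | idtac]. exact: (lt_trans adm h2 h1).
rewrite /evlt => /orP[h|/andP[/eqP e h]].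
  by rewrite hu (leq_ltn_trans hx) // ltn_add2r.
have := hx; rewrite e -hu leq_eqVlt => /orP[->|->] //.
by rewrite ltx ?orbT.
Qed.

Definition bw (c : {ffun 'I_n -> bool}) : word n := [ffun i => nat_of_bool (c i)].
Definition mu u := #|[set c | evlt lt (bw c) u]|.

Lemma mu_lt x u : wstandard x -> evlt lt x u -> (mu x < mu u)%N.
Proof.
move=> hs hxu; apply: proper_card; apply/properP; split.
  by apply/subsetP=> c; rewrite !inE => h; exact: (evlt_trans adm h hxu).
have ex : bw [ffun i => x i != 0%N] = x.
  apply/ffunP=> i; rewrite !ffunE; move/forallP: hs => /(_ i).
  by case: (x i) => [|[|]].
exists [ffun i => x i != 0%N]; rewrite !inE ex //.
by rewrite (negbTE (evlt_irr adm x)).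
Qed.

Variables (m : nat) (H : 'M['F_2]_(n, m)) (N : seq (word n)) (G : seq (binom n)).
Hypothesis out : algR_output H lt N G.

Lemma red_std w : ~~ wstandard w -> red1 G w (wstd w).
Proof. by move=> h; left. Qed.

Lemma red_G q s : q \in G -> wstandard (wmul q.1 s) -> red1 G (wmul q.1 s) (wmul q.2 s).
Proof. by move=> qG hs; right; split=> //; exists q => //; exists s. Qed.

Lemma exist_irr u : exists2 w, clos_refl_trans _ (red1 G) u w & irreducible G w.
Proof.
suff hst u' : wstandard u' -> exists2 w, clos_refl_trans _ (red1 G) u' w & irreducible G w.
  case: (boolP (wstandard u)) => hu; first exact: hst.
  have [w h1 h2] := hst _ (std_standard u); exists w => //.
  by apply: rt_trans h1; apply: rt_step; apply: red_std.
clear u; have [k] := ubnP (mu u'); elim: k u' => // k IH u hk hs.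
case: (boolP (has (fun q : binom n => wdvd q.1 u) G)) => hG; last first.
  exists u; first exact: rt_refl.
  move=> w' [[/negP //]|[_ [q qG [s [eu _]]]]].
  by move/hasP: hG; apply; exists q => //; apply/wdvdP; exists s.
have [q qG /wdvdP [s eu]] := hasP hG.
have [_ ev] := outG adm out qG.
set t := wstd (wmul q.2 s).
have ut : clos_refl_trans _ (red1 G) u t.
  rewrite eu; apply: rt_trans (rt_step _ _ _ _ (red_G qG _)) _; first by rewrite -eu.
  case: (boolP (wstandard (wmul q.2 s))) => h; first by rewrite /t std_id //; apply: rt_refl.
  by apply: rt_step; apply: red_std.
have ht : evlt lt t u by rewrite eu; apply: evlt_red => //; rewrite -eu.
have [w h1 h2] := IH t (leq_trans (mu_lt (std_standard _) ht) (ltnSE hk)) (std_standard _).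
by exists w => //; apply: rt_trans h1.
Qed.

Lemma irr_N w : irreducible G w -> w \in N.
Proof.
move=> hi; have hs : wstandard w by apply/negPn/negP => h; apply: (hi (wstd w)); left.
apply: (outCN out hs) => q qG; apply/negP => /wdvdP [s ew].
by apply: (hi (wmul q.2 s)); rewrite ew; apply: red_G => //; rewrite -ew.
Qed.

Lemma one_N : wone n \in N.
Proof.
apply: (outCN out); first by apply/forallP=> i; rewrite ffunE.
move=> q qG; apply/negP => /wdvd1 e.
by have [_] := outG adm out qG; rewrite e (negbTE (evlt1 adm _)).
Qed.

Lemma syn_pres x y : clos_refl_trans _ (red1 G) x y -> syndrome H x = syndrome H y.
Proof.
apply: red_pres.
- by move=> a b s e; rewrite !syn_mul e.
- exact: syn_std.
- by move=> q qG; case: (outG adm out qG).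
Qed.

Lemma L6 x y : syndrome H x = syndrome H y -> reduces_to_zero G (x, y).
Proof.
move=> e; have [w1 h1 i1] := exist_irr x; have [w2 h2 i2] := exist_irr y.
have e12 : w1 = w2.
  apply: (uniq_map_inj (outU adm out)); [exact: irr_N | exact: irr_N |].
  by rewrite -(syn_pres h1) -(syn_pres h2).
by exists w1; split=> //; rewrite e12.
Qed.

Definition wof (c : 'rV['F_2]_n) : word n := [ffun i => nat_of_bool (c 0 i != 0)].

Lemma psi_wof c : psi (wof c) = c.
Proof.
apply/rowP=> i; rewrite !mxE ffunE.
by case: (c 0 i) => [[|[|]]] //= ?; apply: val_inj.
Qed.

Lemma L1 c : c \in code H -> clos_refl_trans _ (red1 G) (wof c) (wone n).
Proof.
rewrite inE => /eqP hc.
have [w h1 i1] := exist_irr (wof c).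
have -> : wone n = w.
  apply: (uniq_map_inj (outU adm out)); [exact: one_N | exact: irr_N |].
  by rewrite -(syn_pres h1) syn1 /syndrome psi_wof hc.
exact: h1.
Qed.

End Red.

Section Perm.
Variables (n : nat) (p : {perm 'I_n}).
Implicit Types a b s u v w x y : word n.
Local Notation sp := (wperm p).

Lemma wpermK w : wperm p^-1%g (sp w) = w.
Proof. by apply/ffunP=> j; rewrite !ffunE invgK permK. Qed.
Lemma wpermKV w : sp (wperm p^-1%g w) = w.
Proof. by apply/ffunP=> j; rewrite !ffunE invgK permKV. Qed.
Lemma wperm_inj : injective sp.
Proof. by move=> u v e; rewrite -(wpermK u) e wpermK. Qed.
Lemma wperm_mul a b : sp (wmul a b) = wmul (sp a) (sp b).
Proof. by apply/ffunP=> j; rewrite !ffunE. Qed.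
Lemma wperm_one : sp (wone n) = wone n.
Proof. by apply/ffunP=> j; rewrite !ffunE. Qed.
Lemma wperm_x i : sp (xvar i) = xvar (p i).
Proof.
apply/ffunP=> j; rewrite !ffunE; congr (nat_of_bool _).
by rewrite -(inj_eq (@perm_inj _ p)) permKV.
Qed.
Lemma wperm_std w : sp (wstd w) = wstd (sp w).
Proof. by apply/ffunP=> j; rewrite !ffunE. Qed.

Lemma forall_perm (P : 'I_n -> bool) : [forall j, P (p^-1%g j)] = [forall i, P i].
Proof.
apply/forallP/forallP => h i; last exact: h.
by have := h (p i); rewrite permK.
Qed.

Lemma wdvd_perm a b : wdvd (sp a) (sp b) = wdvd a b.
Proof.
rewrite /wdvd -(forall_perm (fun i => a i <= b i)%N).
by apply: eq_forallb => j; rewrite !ffunE.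
Qed.
Lemma wstandard_perm w : wstandard (sp w) = wstandard w.
Proof.
rewrite /wstandard -(forall_perm (fun i => w i <= 1)%N).
by apply: eq_forallb => j; rewrite !ffunE.
Qed.
Lemma Ind_perm w : Ind (sp w) = p @: Ind w.
Proof.
apply/setP=> j; rewrite -{2}(permKV p j) mem_imset; last exact: perm_inj.
by rewrite !inE ffunE.
Qed.
Lemma card_Ind_perm w : #|Ind (sp w)| = #|Ind w|.
Proof. by rewrite Ind_perm card_imset //; apply: perm_inj. Qed.

Variable lt : word n -> word n -> bool.
Definition ltp u v := lt (wperm p^-1%g u) (wperm p^-1%g v).

Lemma ltp_perm u v : ltp (sp u) (sp v) = lt u v.
Proof. by rewrite /ltp !wpermK. Qed.

Lemma evlt_perm u v : evlt ltp (sp u) (sp v) = evlt lt u v.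
Proof. by rewrite /evlt !card_Ind_perm ltp_perm. Qed.

Lemma adm_perm : admissible lt -> admissible ltp.
Proof.
case=> h1 h2 h3 h4 h5; split.
- by move=> u; apply: h1.
- by move=> u v w; apply: h2.
- move=> u w nuw; apply: h3; apply: contra nuw => /eqP e.
  by rewrite -(wpermKV u) e wpermKV.
- move=> w nw.
  have e1 : wperm p^-1%g (wone n) = wone n by apply/ffunP=> j; rewrite !ffunE.
  rewrite /ltp e1; apply: h4; apply: contra nw => /eqP e.
  by rewrite -(wpermKV w) e wperm_one.
- move=> u w s0; rewrite /ltp.
  have hm (a b : word n) : wperm p^-1%g (wmul a b) = wmul (wperm p^-1%g a) (wperm p^-1%g b).
    by apply/ffunP=> j; rewrite !ffunE.
  by rewrite !hm; apply: h5.
Qed.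

Lemma psi_perm w : psi (sp w) = vperm p (psi w).
Proof. by apply/rowP=> j; rewrite !mxE ffunE. Qed.

Lemma red1_perm B x y : red1 B x y -> red1 (map (bperm p) B) (sp x) (sp y).
Proof.
case=> [[hs ->]|[hs [q qB [s [ex ->]]]]].
  by left; rewrite wperm_std wstandard_perm.
right; split; first by rewrite wstandard_perm.
exists (bperm p q); first exact: map_f.
by exists (sp s); rewrite ex !wperm_mul.
Qed.

Lemma rt_perm B x y : clos_refl_trans _ (red1 B) x y ->
  clos_refl_trans _ (red1 (map (bperm p) B)) (sp x) (sp y).
Proof.
elim=> [{}x {}y h|{}x|x0 y0 z0 _ h1 _ h2].
- by apply: rt_step; apply: red1_perm.
- exact: rt_refl.
- exact: rt_trans h1 h2.
Qed.

End Perm.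

Lemma red1_eq n (B1 B2 : seq (binom n)) x y : B1 =i B2 -> red1 B1 x y -> red1 B2 x y.
Proof.
move=> e; case=> [h|[hs [q qB hq]]]; first by left.
by right; split=> //; exists q => //; rewrite -e.
Qed.

Lemma rt_eq n (B1 B2 : seq (binom n)) x y : B1 =i B2 ->
  clos_refl_trans _ (red1 B1) x y -> clos_refl_trans _ (red1 B2) x y.
Proof.
move=> e; elim=> [{}x {}y h|{}x|x0 y0 z0 _ h1 _ h2].
- by apply: rt_step; apply: red1_eq h.
- exact: rt_refl.
- exact: rt_trans h1 h2.
Qed.

Lemma irr_eq n (B1 B2 : seq (binom n)) w : B1 =i B2 -> irreducible B1 w -> irreducible B2 w.
Proof. by move=> e h w' /(red1_eq (fun x => esym (e x))); apply: h. Qed.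

Lemma rtz_eq n (B1 B2 : seq (binom n)) q : B1 =i B2 ->
  reduces_to_zero B1 q -> reduces_to_zero B2 q.
Proof.
move=> e [w [h1 h2 h3]]; exists w; split.
- exact: rt_eq h1.
- exact: rt_eq h2.
- exact: irr_eq h3.
Qed.

Lemma synE n m (M : 'M['F_2]_(n, m)) x y :
  (syndrome M x == syndrome M y) = ((psi x - psi y) \in code M).
Proof. by rewrite inE /syndrome mulmxBl subr_eq0. Qed.

Section Sim.
Variables (n m m' : nat) (H : 'M['F_2]_(n, m)) (H' : 'M['F_2]_(n, m')).
Variables (p : {perm 'I_n}) (lt : word n -> word n -> bool).
Hypothesis hc : code H' = codeperm p (code H).
Local Notation sp := (wperm p).

Lemma vpermB a b : vperm p (a - b) = vperm p a - vperm p b.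
Proof. by apply/rowP=> j; rewrite !mxE. Qed.

Lemma vperm_inj : injective (vperm p).
Proof.
move=> a b e; apply/rowP=> i; have := congr1 (fun c : 'rV['F_2]_n => c 0 (p i)) e.
by rewrite !mxE permK.
Qed.

Lemma syn_perm x y :
  (syndrome H' (sp x) == syndrome H' (sp y)) = (syndrome H x == syndrome H y).
Proof.
rewrite !synE !psi_perm -vpermB hc /codeperm mem_imset //; exact: vperm_inj.
Qed.

Definition sim (t st : stateR n) :=
  [/\ t.1.1 =i map sp st.1.1, t.1.2 = map sp st.1.2 & t.2 = map (bperm p) st.2].

Lemma sim_step st st' t : stepR H lt st st' -> sim t st ->
  exists t', stepR H' (ltp p lt) t t' /\ sim t' st'.
Proof.
case: st => [[L N] G]; case: st' => [[L' N'] G']; case: t => [[L1 N1] G1] /=.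
move=> [w [wL wmin hst]] [/= eL -> ->].
have eL0 : [seq v <- L1 | v != sp w] =i map sp [seq v <- L | v != w].
  move=> x; apply/idP/idP.
    rewrite mem_filter eL => /andP[nx /mapP[y yL ex]]; rewrite ex map_f //.
    by rewrite mem_filter yL andbT; apply: contra nx => /eqP e; rewrite ex e.
  move=> /mapP[y]; rewrite mem_filter => /andP[ny yL] ->.
  by rewrite mem_filter eL map_f // andbT (inj_eq (@wperm_inj _ p)) ny.
have hw : sp w \in L1 by rewrite eL map_f.
have hmin v : v \in L1 -> v != sp w -> evlt (ltp p lt) (sp w) v.
  rewrite eL => /mapP[y yL ->] ny; rewrite evlt_perm; apply: wmin => //.
  by apply: contra ny => /eqP->.
have hG : has (fun b : binom n => wdvd b.1 (sp w)) (map (bperm p) G)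
          = has (fun b : binom n => wdvd b.1 w) G.
  by rewrite has_map; apply: eq_has => b /=; apply: wdvd_perm.
have hN : has (fun w' => syndrome H' w' == syndrome H' (sp w)) (map sp N)
          = has (fun w' => syndrome H w' == syndrome H w) N.
  by rewrite has_map; apply: eq_has => y /=; apply: syn_perm.
move: hst; case: ifP => hG0.
  case=> -> -> ->.
  exists ([seq v <- L1 | v != sp w], map sp N, map (bperm p) G); split; last by split.
  by exists (sp w); split=> //=; rewrite hG hG0.
case: ifP => hN0.
  move=> [w' [w'N sw'] [-> -> ->]].
  exists ([seq v <- L1 | v != sp w], map sp N, rcons (map (bperm p) G) (sp w, sp w')).
  split; last by split=> //; rewrite map_rcons.
  exists (sp w); split=> //=; rewrite hG hG0 hN hN0.
  by exists (sp w'); [split; [apply: map_f | apply/eqP; rewrite syn_perm sw'] |].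
case=> -> -> ->.
exists ([seq v <- L1 | v != sp w] ++ [seq wmul (sp w) (xvar i) | i <- enum 'I_n],
        rcons (map sp N) (sp w), map (bperm p) G).
split.
  by exists (sp w); split=> //=; rewrite hG hG0 hN hN0.
split=> //=; last by rewrite map_rcons.
move=> x; rewrite map_cat !mem_cat eL0; congr (_ || _).
rewrite -map_comp; apply/mapP/mapP => [[i _ ->]|[i _ ->]].
  exists (p^-1%g i); first by rewrite mem_enum.
  by rewrite /= wperm_mul wperm_x permKV.
by exists (p i); rewrite ?mem_enum //= wperm_mul wperm_x.
Qed.

Lemma sim_rt st st' : clos_refl_trans _ (stepR H lt) st st' ->
  forall t, sim t st -> exists t', clos_refl_trans _ (stepR H' (ltp p lt)) t t' /\ sim t' st'.
Proof.
elim=> [x y h t ht|x t ht|x y z _ IH1 _ IH2 t ht].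
- by have [t' [h1 h2]] := sim_step h ht; exists t'; split=> //; apply: rt_step.
- by exists t; split=> //; apply: rt_refl.
- have [t1 [h1 h2]] := IH1 t ht; have [t2 [h3 h4]] := IH2 t1 h2.
  by exists t2; split=> //; apply: rt_trans h1 h3.
Qed.

Lemma out_perm N G : algR_output H lt N G ->
  algR_output H' (ltp p lt) (map sp N) (map (bperm p) G).
Proof.
move=> out.
have h0 : sim ([:: wone n], [::], [::]) ([:: wone n], [::], [::]).
  by split=> //= x; rewrite wperm_one.
have [t [h1 [/= eL eN eG]]] := sim_rt out h0.
case: t h1 eL eN eG => [[L1 N1] G1] /= h1 eL eN eG.
have e1 : L1 = [::] by case: L1 eL h1 => // a l /(_ a); rewrite mem_head.
by move: h1; rewrite e1 eN eG.
Qed.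

End Sim.

Close Scope ring_scope.

Theorem theorem4p2 (n m m' : nat) (H : 'M['F_2]_(n, m)) (H' : 'M['F_2]_(n, m'))
  (s : {perm 'I_n}) (lt lt' : word n -> word n -> bool)
  (G G' : seq (binom n)) :
  admissible lt -> reduced_basis H lt G ->
  admissible lt' -> reduced_basis H' lt' G' ->
  let Gstar := map (bperm s) G in
  [<-> code H' = codeperm s (code H);
       exists lt'' : word n -> word n -> bool,
         admissible lt'' /\
         exists2 G0, reduced_basis H' lt'' G0 & G0 =i Gstar;
       (forall b, b \in Gstar -> reduces_to_zero G' b) /\
       (forall b, b \in G' -> reduces_to_zero Gstar b)].
Proof.
move=> admL [N hout] admL' [N' hout'] Gstar.
split; [|split].
- move=> hc; exists (ltp s lt); split; first exact: adm_perm.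
  exists (map (bperm s) G) => //; exists (map (wperm s) N); exact (out_perm hc hout).
- move=> [lt'' [adm'' [G0 [N0 hout0] eG0]]]; split.
  + move=> b bG; have bG0 : b \in G0 by rewrite eG0.
    have [e _] := outG adm'' hout0 bG0.
    by case: b bG bG0 e => x y _ _ e; apply: (L6 admL' hout' e).
  + move=> b bG; have [e _] := outG admL' hout' bG.
    apply: (rtz_eq eG0); case: b bG e => x y _ e; exact: (L6 adm'' hout0 e).
move=> [h1 h2].
have hA : forall q : binom n, q \in Gstar -> syndrome H' q.1 = syndrome H' q.2.
  move=> q /h1 [w [r1 r2 _]].
  by rewrite (syn_pres admL' hout' r1) (syn_pres admL' hout' r2).
pose f (x : word n) := syndrome H (wperm s^-1%g x).
have fm : forall a b s0 : word n, f a = f b -> f (wmul a s0) = f (wmul b s0).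
  by move=> a b s0; rewrite /f !wperm_mul !syn_mul => ->.
have fs : forall w : word n, f (wstd w) = f w by move=> w; rewrite /f wperm_std syn_std.
have fG : forall q : binom n, q \in Gstar -> f q.1 = f q.2.
  move=> q /mapP [q0 q0G ->]; rewrite /f /= !wpermK.
  by case: (outG admL hout q0G).
have hB : forall q : binom n, q \in G' -> f q.1 = f q.2.
  move=> q /h2 [w [r1 r2 _]].
  by rewrite (red_pres fm fs fG r1) (red_pres fm fs fG r2).
have hm : forall a b s0 : word n, syndrome H' a = syndrome H' b ->
    syndrome H' (wmul a s0) = syndrome H' (wmul b s0).
  by move=> a b s0 e; rewrite !syn_mul e.
apply/setP=> c; apply/idP/idP.
- move=> hc; have r := L1 admL' hout' hc.
  have e := red_pres fm fs hB r.
  have hd : psi (wperm s^-1%g (wof c)) \in code H.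
    have e1 : wperm s^-1%g (wone n) = wone n by apply/ffunP=> j; rewrite !ffunE.
    by rewrite inE; apply/eqP; move: e; rewrite /f /syndrome => ->; rewrite e1 psi1 mul0mx.
  apply/imsetP; exists (psi (wperm s^-1%g (wof c))) => //.
  by rewrite -psi_perm wpermKV psi_wof.
- move=> /imsetP [d hd ->]; have r := rt_perm s (L1 admL hout hd).
  have e := red_pres hm (@syn_std _ _ H') hA r.
  have ep : psi (wperm s (wof d)) = vperm s d by rewrite psi_perm psi_wof.
  rewrite inE -ep; apply/eqP.
  rewrite -[(psi _ *m _)%R]/(syndrome H' (wperm s (wof d))) e wperm_one.
  by rewrite /syndrome psi1 mul0mx.
Qed.
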